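(* Let $U\in\mathbb{U}_N$ and $T\subseteq[n]$, and suppose $\sum_{\vec{x}\in\mathbb{Z}_4^T}|\mu_{\vec{x}}(U)|^2 \ge 1-\delta$. Then there exists $\tilde{V}\in\mathbb{U}_{2^{|T|}}$ such that $D(U,\tilde{V}_T\otimes I_{T^c})\le 2\sqrt{\delta}$.
   Context: $n\ge1$, $N=2^n$, $[n]=\{1,\dots,n\}$ indexes the qubits of $(\mathbb{C}^2)^{\otimes n}$; $\mathbb{U}_d$ is the group of $d\times d$ unitaries. Pauli matrices: $\sigma_0=I$, $\sigma_1=X$, $\sigma_2=Y$, $\sigma_3=Z$; for $\vec{x}=(x_1,\dots,x_n)\in\mathbb{Z}_4^n=\{0,1,2,3\}^n$, $\sigma_{\vec{x}}=\sigma_{x_1}\otimes\cdots\otimes\sigma_{x_n}$. Every $A\in\mathbb{M}_{N,N}$ is written uniquely as $A=\sum_{\vec{x}}\mu_{\vec{x}}(A)\sigma_{\vec{x}}$ with $\mu_{\vec{x}}(A)=\frac1N\mathrm{tr}(\sigma_{\vec{x}}A)$. $\mathrm{supp}(\vec{x})=\{i: x_i\ne0\}$ and $\mathbb{Z}_4^T=\{\vec{x}\in\mathbb{Z}_4^n:\mathrm{supp}(\vec{x})\subseteq T\}$. $V_T\otimes I_{T^c}$ denotes the operator acting as $V$ on the qubits in $T$ and as identity on those in $T^c=[n]\setminus T$. $\|A\|=\sqrt{\mathrm{tr}(A^\dagger A)}$ and $D(A,B)=\min_{\theta\in[0,2\pi)}\frac{1}{\sqrt{2N}}\|e^{i\theta}A-B\|$.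 *)

(* Defs.v *)
From HB Require Import structures.
From mathcomp Require Import all_boot all_order all_algebra.
Set Implicit Arguments. Unset Strict Implicit. Unset Printing Implicit Defensive.
Import Order.TTheory GRing.Theory Num.Theory.
Local Open Scope ring_scope.

Section Qubits.
Variable C : numClosedFieldType.

(* Bit of basis index i : 'I_(2^n) for qubit k : 'I_n (qubit 0 = first
   tensor factor = most significant bit). *)
Definition qbit (n : nat) (i : nat) (k : 'I_n) : bool :=
  odd (i %/ 2 ^ (n.-1 - k)).

(* Single-qubit Pauli matrices sigma_0..sigma_3 = I, X, Y, Z, entry (b,c),
   basis vector |0> <-> false, |1> <-> true. *)
Definition pauli1 (a : 'I_4) (b c : bool) : C :=
  match val a with
  | 0 => (b == c)%:R
  | 1 => (b != c)%:R
  | 2 => if b == c then 0 else if c then - 'i else 'i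
  | _ => if b == c then (if b then -1 else 1) else 0
  end.

Definition pauli (n : nat) (x : {ffun 'I_n -> 'I_4}) : 'M[C]_(2 ^ n) :=
  \matrix_(i, j) \prod_(k < n) pauli1 (x k) (qbit i k) (qbit j k).

Definition mu (n : nat) (x : {ffun 'I_n -> 'I_4}) (A : 'M[C]_(2 ^ n)) : C :=
  ((2 ^ n)%:R)^-1 * \tr (pauli x *m A).

Definition in_Z4T (n : nat) (T : {set 'I_n}) (x : {ffun 'I_n -> 'I_4}) : bool :=
  [forall k, (x k != 0%R :> 'I_4) ==> (k \in T)].

(* cast a nat into 'I_(2^p) (reduction mod 2^p, harmless below) *)
Definition ord2p (p k : nat) : 'I_(2 ^ p) :=
  Ordinal (ltn_pmod k (expn_gt0 2 p)).

(* index of the basis state of the qubits in T (in increasing order, first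
   one most significant) extracted from the basis index i *)
Definition restr (n : nat) (T : {set 'I_n}) (i : nat) : 'I_(2 ^ #|T|) :=
  ord2p #|T| (foldl (fun acc k => acc.*2 + qbit i k)%N 0%N (enum T)).

Definition tensorT (n : nat) (T : {set 'I_n}) (V : 'M[C]_(2 ^ #|T|)) :
  'M[C]_(2 ^ n) :=
  \matrix_(i, j) (V (restr T i) (restr T j) *
                  (restr (~: T) i == restr (~: T) j)%:R).

Definition adj m (A : 'M[C]_m) : 'M[C]_m := (map_mx Num.conj A)^T.

Definition unitary m (A : 'M[C]_m) : bool := adj A *m A == 1%:M.

Definition fnorm m (A : 'M[C]_m) : C := sqrtC (\tr (adj A *m A)).

(* The function whose minimum over theta defines D(A,B):
   (1/sqrt(2N)) ||e^{i theta} A - B||, with c = e^{i theta}, |c| = 1. *)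
Definition Dfun (n : nat) (A B : 'M[C]_(2 ^ n)) (c : C) : C :=
  (sqrtC (2 * 2 ^ n)%:R)^-1 * fnorm (c *: A - B).

(* D(A,B) <= r, i.e. min_{theta} Dfun(e^{i theta}) <= r; the minimum is
   attained, so this is: some unimodular phase achieves value <= r. *)
Definition D_le (n : nat) (A B : 'M[C]_(2 ^ n)) (r : C) : Prop :=
  exists c : C, `|c| = 1 /\ Dfun A B c <= r.

End Qubits.
Arguments tensorT {C n} T V.

(* Main.v *)
Require Import Defs.
From HB Require Import structures.
From mathcomp Require Import all_boot all_order all_algebra.
From mathcomp Require Import zify ring lra.
Import Order.TTheory GRing.Theory Num.Theory.
Local Open Scope ring_scope.

Lemma bits_eq_nat n i j : (i < 2^n)%N -> (j < 2^n)%N ->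
  (forall m, (m < n)%N -> odd (i %/ 2^m) = odd (j %/ 2^m)) -> i = j.
Proof.
elim: n i j => [|n IH] i j.
  by rewrite expn0 !ltnS !leqn0 => /eqP -> /eqP ->.
move=> Hi Hj H.
have H0 : odd i = odd j by have := H 0%N erefl; rewrite expn0 !divn1.
have Hh : i./2 = j./2.
  apply: IH.
  - by rewrite -divn2 ltn_divLR // -expnSr.
  - by rewrite -divn2 ltn_divLR // -expnSr.
  move=> m Hm; rewrite -!divn2 -!divnMA -expnS; exact: H.
by rewrite -(odd_double_half i) -(odd_double_half j) H0 Hh.
Qed.

Lemma qbit_inj n (i j : 'I_(2^n)) : (forall k : 'I_n, qbit i k = qbit j k) -> i = j.
Proof.
move=> H; apply: val_inj => /=; apply: (@bits_eq_nat n) ; [exact: ltn_ord | exact: ltn_ord |] => m Hm.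
have Hk : (n.-1 - m < n)%N by lia.
have := H (Ordinal Hk); rewrite /qbit /=.
have -> : (n.-1 - (n.-1 - m) = m)%N by lia.
by [].
Qed.

Definition fb n (i : nat) := fun acc (k : 'I_n) => (acc.*2 + qbit i k)%N.
Arguments fb {n}.

Lemma fold_lt n i (s : seq 'I_n) : (foldl (fb i) 0%N s < 2^(size s))%N.
Proof.
elim/last_ind: s => [|s x IH]; first by rewrite /= expn0.
rewrite foldl_rcons size_rcons expnS /fb.
have := leq_b1 (qbit i x); rewrite -muln2; move: IH; set a := foldl _ _ _; set b := nat_of_bool _; lia.
Qed.

Lemma fold_inj n i j (s : seq 'I_n) :
  foldl (fb i) 0%N s = foldl (fb j) 0%N s <-> forall k, k \in s -> qbit i k = qbit j k.
Proof.
elim/last_ind: s => [|s x IH]; first by split => // _ k; rewrite in_nil.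
rewrite !foldl_rcons /fb; split.
  move=> E.
  have Eb : qbit i x = qbit j x.
    by have := congr1 odd E; rewrite !oddD !odd_double /= !oddb.
  have Ea : foldl (fb i) 0%N s = foldl (fb j) 0%N s.
    have := congr1 half E; rewrite ![(_.*2 + _)%N]addnC !half_bit_double.
    by [].
  move=> k; rewrite mem_rcons in_cons => /orP [/eqP -> // | Hk].
  by move/IH: Ea; apply.
move=> H.
have -> : foldl (fun acc k => (acc.*2 + qbit i k)%N) 0%N s = foldl (fb j) 0%N s.
  by apply/IH => k Hk; apply: H; rewrite mem_rcons in_cons Hk orbT.
by rewrite H // mem_rcons in_cons eqxx.
Qed.

Lemma restr_eq n (S : {set 'I_n}) i j :
  restr S i = restr S j <-> forall k, k \in S -> qbit i k = qbit j k.
Proof.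
have Hs := @fold_lt n _ (enum S).
rewrite /restr /ord2p; split.
  move=> /(congr1 val) /=; rewrite !modn_small ?cardE; try exact: Hs.
  move/(@fold_inj n i j (enum S)) => H k Hk; apply: H; by rewrite mem_enum.
move=> H; apply: val_inj => /=.
have -> : foldl (fun acc k => (acc.*2 + qbit i k)%N) 0%N (enum S) =
          foldl (fb j) 0%N (enum S).
  by apply/fold_inj => k; rewrite mem_enum; apply: H.
by [].
Qed.
Arguments restr_eq {n S i j}.
Set Implicit Arguments. Unset Strict Implicit. Unset Printing Implicit Defensive.

Section Bij.
Variable n : nat.
Variable T : {set 'I_n}.
Local Notation M := (2 ^ #|T|)%N.
Local Notation K := (2 ^ #|~: T|)%N.

Definition epair (i : 'I_(2^n)) : 'I_M * 'I_K := (restr T i, restr (~: T) i).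

Lemma epair_inj : injective epair.
Proof.
move=> i j E.
have /restr_eq H1 : restr T i = restr T j := congr1 fst E.
have /restr_eq H2 : restr (~: T) i = restr (~: T) j := congr1 snd E.
apply: qbit_inj => k.
by case: (boolP (k \in T)) => Hk; [apply: H1 | apply: H2; rewrite inE Hk].
Qed.

Lemma cardMK : (M * K = 2 ^ n)%N.
Proof. by rewrite -expnD cardsC card_ord. Qed.

Lemma epair_bij : bijective epair.
Proof.
apply: (inj_card_bij epair_inj).
by rewrite card_prod !card_ord cardMK.
Qed.

Definition fpair (p : 'I_M * 'I_K) : 'I_(2^n) :=
  odflt (Ordinal (expn_gt0 2 n)) [pick i | epair i == p].

Lemma fpairK : cancel fpair epair.
Proof.
move=> p; rewrite /fpair; case: pickP => [i /eqP //|H].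
case: epair_bij => g _ gK; by have := H (g p); rewrite gK eqxx.
Qed.

Lemma epairK : cancel epair fpair.
Proof. by move=> i; apply: epair_inj; rewrite fpairK. Qed.

Lemma fpair_bij : bijective fpair.
Proof. by exists epair; [exact: fpairK | exact: epairK]. Qed.

Lemma restr_fpair a c : restr T (fpair (a, c)) = a.
Proof. by have := fpairK (a, c); rewrite /epair => -[]. Qed.

Lemma restrC_fpair a c : restr (~: T) (fpair (a, c)) = c.
Proof. by have := fpairK (a, c); rewrite /epair => -[]. Qed.

Lemma sum_reindex (R : nmodType) (F : 'I_(2^n) -> R) :
  \sum_i F i = \sum_a \sum_c F (fpair (a, c)).
Proof.
rewrite (reindex fpair); last by apply: onW_bij; exact: fpair_bij.
by rewrite pair_bigA.
Qed.

End Bij.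

Section Frob.
Variable C : numClosedFieldType.

Definition frob m (X Y : 'M[C]_m) : C := \sum_i \sum_j (X i j)^* * Y i j.

Lemma tr_adj m (X Y : 'M[C]_m) : \tr (adj X *m Y) = frob X Y.
Proof.
rewrite /mxtrace /frob exchange_big /=; apply: eq_bigr => j _.
by rewrite mxE; apply: eq_bigr => i _; rewrite !mxE.
Qed.

Lemma frobC m (X Y : 'M[C]_m) : frob Y X = (frob X Y)^*.
Proof.
rewrite /frob rmorph_sum; apply: eq_bigr => i _; rewrite rmorph_sum.
by apply: eq_bigr => j _; rewrite rmorphM /= conjCK mulrC.
Qed.

Lemma frob_unitary m (U : 'M[C]_m) : unitary U -> frob U U = m%:R.
Proof. by move=> /eqP HU; rewrite -tr_adj HU mxtrace1. Qed.

Lemma frob_ge0 m (X : 'M[C]_m) : 0 <= frob X X.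
Proof.
by apply: sumr_ge0 => i _; apply: sumr_ge0 => j _; rewrite mulrC mul_conjC_ge0.
Qed.

Lemma conjMK (x y : C) : (x^* * y)^* = x * y^*.
Proof. by rewrite rmorphM /= conjCK. Qed.

Lemma sum_delta k (F : 'I_k -> C) c : \sum_d F d * (c == d)%:R = F c.
Proof.
rewrite (bigD1 c) //= eqxx mulr1 big1 ?addr0 // => d Hd.
by rewrite eq_sym (negbTE Hd) mulr0.
Qed.

Lemma re_le m (a w : 'I_m -> C) :
  \sum_i ((a i)^* * w i + a i * (w i)^*) <=
  \sum_i `|a i| ^+ 2 + \sum_i `|w i| ^+ 2.
Proof.
rewrite -big_split /=; apply: ler_sum => i _.
rewrite -subr_ge0 !normCK.
have -> : a i * (a i)^* + w i * (w i)^* - ((a i)^* * w i + a i * (w i)^*) =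
          (a i - w i) * (a i - w i)^* by rewrite rmorphB /=; ring.
exact: mul_conjC_ge0.
Qed.

Lemma unit_norm m (U : 'M[C]_m) (b : 'I_m -> C) : unitary U ->
  \sum_i `|\sum_j U i j * b j| ^+ 2 = \sum_j `|b j| ^+ 2.
Proof.
move=> /eqP HU.
have E l j : \sum_i (U i l)^* * U i j = (j == l)%:R.
  have := congr1 (fun X : 'M_m => X l j) HU; rewrite !mxE eq_sym => <-.
  by apply: eq_bigr => i _; rewrite !mxE.
transitivity (\sum_i \sum_j \sum_l U i j * b j * ((U i l)^* * (b l)^*)).
  apply: eq_bigr => i _; rewrite normCK rmorph_sum mulr_suml.
  apply: eq_bigr => j _; rewrite mulr_sumr; apply: eq_bigr => l _.
  by rewrite rmorphM.
rewrite exchange_big /=; apply: eq_bigr => j _.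
rewrite exchange_big /= normCK -(sum_delta (fun l => b j * (b l)^*) j).
apply: eq_bigr => l _; rewrite -E mulr_sumr; apply: eq_bigr => i _.
ring.
Qed.

End Frob.

Section Tensor.
Variable C : numClosedFieldType.
Variable n : nat.
Variable T : {set 'I_n}.
Local Notation M := (2 ^ #|T|)%N.
Local Notation K := (2 ^ #|~: T|)%N.
Local Notation fp := (@fpair n T).
Local Notation ep := (@epair n T).

Definition TrW (U : 'M[C]_(2^n)) (a b : 'I_M) : C :=
  \sum_c U (fp (a, c)) (fp (b, c)).

Lemma tensorT_fpair (Y : 'M[C]_M) a c b d :
  tensorT T Y (fp (a, c)) (fp (b, d)) = Y a b * (c == d)%:R.
Proof.
by rewrite mxE !restr_fpair !restrC_fpair.
Qed.

Lemma frob_tensorL (Y : 'M[C]_M) (U : 'M[C]_(2^n)) :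
  frob (tensorT T Y) U = \sum_a \sum_b (Y a b)^* * TrW U a b.
Proof.
rewrite /frob (sum_reindex T); apply: eq_bigr => a _.
under eq_bigr do rewrite (sum_reindex T).
rewrite exchange_big /=; apply: eq_bigr => b _.
rewrite /TrW mulr_sumr; apply: eq_bigr => c _.
rewrite -(sum_delta (fun d => (Y a b)^* * U (fp (a, c)) (fp (b, d))) c).
apply: eq_bigr => d _; rewrite tensorT_fpair rmorphM /= conjC_nat; ring.
Qed.

Lemma TrW_tensor (Y : 'M[C]_M) a b : TrW (tensorT T Y) a b = K%:R * Y a b.
Proof.
rewrite /TrW; under eq_bigr do rewrite tensorT_fpair eqxx mulr1.
by rewrite sumr_const card_ord mulr_natl.
Qed.

Lemma frob_tensor (Y Y' : 'M[C]_M) :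
  frob (tensorT T Y) (tensorT T Y') = K%:R * frob Y Y'.
Proof.
rewrite frob_tensorL /frob mulr_sumr; apply: eq_bigr => a _.
rewrite mulr_sumr; apply: eq_bigr => b _; rewrite TrW_tensor; ring.
Qed.

Lemma contraction (U : 'M[C]_(2^n)) (al be : 'I_M -> C) : unitary U ->
  \sum_a `|al a| ^+ 2 = 1 -> \sum_b `|be b| ^+ 2 = 1 ->
  forall z, z = \sum_a \sum_b (al a)^* * TrW U a b * be b ->
  z + z^* <= 2 * K%:R.
Proof.
move=> HU Ha Hb z Hz.
pose zc c := \sum_a \sum_b (al a)^* * U (fp (a, c)) (fp (b, c)) * be b.
have -> : z = \sum_c zc c.
  rewrite Hz /zc [RHS]exchange_big /=; apply: eq_bigr => a _.
  rewrite [RHS]exchange_big /=; apply: eq_bigr => b _.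
  by rewrite /TrW mulr_sumr mulr_suml.
rewrite rmorph_sum -big_split /=.
have -> : 2 * K%:R = \sum_(c < K) (2 : C).
  by rewrite sumr_const card_ord mulr_natr.
apply: ler_sum => c _.
pose al' (i : 'I_(2^n)) := al (ep i).1 * ((ep i).2 == c)%:R.
pose be' (i : 'I_(2^n)) := be (ep i).1 * ((ep i).2 == c)%:R.
pose w i := \sum_j U i j * be' j.
have Hal' : \sum_i `|al' i| ^+ 2 = 1.
  rewrite -Ha (sum_reindex T); apply: eq_bigr => a _.
  rewrite -(sum_delta (fun _ => `|al a| ^+ 2) c); apply: eq_bigr => d _.
  rewrite /al' fpairK /= normrM normr_nat exprMn eq_sym.
  by case: (c == d); rewrite ?expr1n ?expr0n.
have Hbe' : \sum_i `|be' i| ^+ 2 = 1.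
  rewrite -Hb (sum_reindex T); apply: eq_bigr => a _.
  rewrite -(sum_delta (fun _ => `|be a| ^+ 2) c); apply: eq_bigr => d _.
  rewrite /be' fpairK /= normrM normr_nat exprMn eq_sym.
  by case: (c == d); rewrite ?expr1n ?expr0n.
have Hw : \sum_i `|w i| ^+ 2 = 1 by rewrite /w unit_norm.
have Hzc : zc c = \sum_i (al' i)^* * w i.
  rewrite /zc (sum_reindex T); apply: eq_bigr => a _.
  rewrite -(sum_delta (fun d => \sum_b (al a)^* * U (fp (a, c)) (fp (b, c)) * be b) c).
  apply: eq_bigr => d _.
  rewrite /al' /w fpairK /= (sum_reindex T) rmorphM /= conjC_nat eq_sym.
  case: eqP => [->|_]; last by rewrite !mulr0 mul0r.
  rewrite (_ : true%:R = 1 :> C) // mulr1 mulr_sumr; apply: eq_bigr => b _.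
  rewrite -(sum_delta (fun e => (al a)^* * U (fp (a, c)) (fp (b, e)) * be b) c).
  rewrite mulr_sumr; apply: eq_bigr => e _.
  rewrite /be' fpairK /= eq_sym; ring.
rewrite Hzc rmorph_sum -big_split /=.
under eq_bigr do rewrite conjMK.
apply: le_trans (re_le al' w) _.
by rewrite Hal' Hw.
Qed.
End Tensor.
Arguments TrW {C n} T U a b.

Section Pauli.
Variable C : numClosedFieldType.

Lemma pauli1_conj (a : 'I_4) b c : (pauli1 C a b c)^* = pauli1 C a c b.
Proof.
case: a => [[|[|[|[|m]]]] Ha] //; case: b; case: c;
  rewrite /pauli1 /= ?conjC_nat ?rmorphN /= ?conjCi ?opprK ?conjC0 ?conjC1 //.
Qed.

Lemma pauli1_orth (a a' : 'I_4) :
  \sum_b \sum_c pauli1 C a c b * pauli1 C a' b c = 2 * (a == a')%:R.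
Proof.
case: a => [[|[|[|[|m]]]] Ha] //; case: a' => [[|[|[|[|m']]]] Ha'] //;
  rewrite -val_eqE /= !big_bool /pauli1 /=
   ?mulr0n ?mulr1n ?mul0r ?mulr0 ?add0r ?addr0 ?mul1r ?mulr1 ?mulrN ?mulNr ?mulCii ?opprK;
  ring.
Qed.

End Pauli.

Section PauliN.
Variable C : numClosedFieldType.
Variable n : nat.

Definition bitsf (i : 'I_(2^n)) : {ffun 'I_n -> bool} := [ffun k => qbit i k].

Lemma bitsf_bij : bijective bitsf.
Proof.
apply: (inj_card_bij (f := bitsf)).
  by move=> i j /ffunP H; apply: qbit_inj => k; have := H k; rewrite !ffunE.
by rewrite card_ffun card_bool !card_ord.
Qed.

Lemma sum_bits (F : {ffun 'I_n -> bool} -> C) :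
  \sum_(i : 'I_(2^n)) F (bitsf i) = \sum_g F g.
Proof.
by rewrite [RHS](reindex bitsf) //; apply: onW_bij; exact: bitsf_bij.
Qed.

Lemma sum_bits2 (F : 'I_n -> bool -> bool -> C) :
  \sum_(i : 'I_(2^n)) \sum_(j : 'I_(2^n)) \prod_k F k (qbit i k) (qbit j k) =
  \prod_k \sum_b \sum_c F k b c.
Proof.
transitivity (\sum_(g : {ffun 'I_n -> bool}) \prod_k \sum_c F k (g k) c).
  rewrite -(sum_bits (fun g => \prod_k \sum_c F k (g k) c)).
  apply: eq_bigr => i _.
  rewrite [RHS]bigA_distr_bigA -(sum_bits (fun h => \prod_k F k (bitsf i k) (h k))).
  apply: eq_bigr => j _; apply: eq_bigr => k _; by rewrite !ffunE.
by rewrite bigA_distr_bigA.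
Qed.

Lemma pauli_conj (x : {ffun 'I_n -> 'I_4}) i j :
  (pauli C x i j)^* = pauli C x j i.
Proof.
rewrite !mxE rmorph_prod; apply: eq_bigr => k _; exact: pauli1_conj.
Qed.

Lemma frob_pauli (x y : {ffun 'I_n -> 'I_4}) :
  frob (pauli C x) (pauli C y) = (2^n)%:R * (x == y)%:R.
Proof.
rewrite /frob.
transitivity (\sum_(i : 'I_(2^n)) \sum_(j : 'I_(2^n)) \prod_k
   (fun k b c => pauli1 C (x k) c b * pauli1 C (y k) b c) k (qbit i k) (qbit j k)).
  apply: eq_bigr => i _; apply: eq_bigr => j _.
  by rewrite pauli_conj !mxE -big_split.
rewrite (sum_bits2 (fun k b c => pauli1 C (x k) c b * pauli1 C (y k) b c)) /=.
under eq_bigr do rewrite pauli1_orth.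
rewrite big_split /= prodr_const card_ord natrX.
congr (_ * _).
case: (eqVneq x y) => [->|Hne].
  by rewrite big1 // => k _; rewrite eqxx.
have /existsP [k Hk] : [exists k, x k != y k].
  rewrite -negb_forall; apply: contra Hne => /forallP H.
  by apply/eqP/ffunP => k; apply/eqP/H.
by rewrite (bigD1 k) //= (negbTE Hk) mul0r.
Qed.

Lemma frob_pauliL (x : {ffun 'I_n -> 'I_4}) (U : 'M[C]_(2^n)) :
  frob (pauli C x) U = \tr (pauli C x *m U).
Proof.
rewrite /frob /mxtrace exchange_big /=; apply: eq_bigr => j _.
rewrite mxE; apply: eq_bigr => i _; by rewrite pauli_conj.
Qed.

End PauliN.

Section Struct.
Variable C : numClosedFieldType.
Variable n : nat.
Variable T : {set 'I_n}.
Local Notation M := (2 ^ #|T|)%N.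
Local Notation K := (2 ^ #|~: T|)%N.
Local Notation fp := (@fpair n T).

Lemma pauli_struct (x : {ffun 'I_n -> 'I_4}) (Hx : in_Z4T T x) (c0 : 'I_K) i j :
  pauli C x i j = pauli C x (fp (restr T i, c0)) (fp (restr T j, c0)) *
                  (restr (~: T) i == restr (~: T) j)%:R.
Proof.
have Hx0 k : k \notin T -> x k = 0%R.
  move=> Hk; move/forallP: Hx => /(_ k); rewrite (negbTE Hk) implybF.
  by move/negPn/eqP.
have /restr_eq Hi : restr T (fp (restr T i, c0)) = restr T i by rewrite restr_fpair.
have /restr_eq Hj : restr T (fp (restr T j, c0)) = restr T j by rewrite restr_fpair.
have /restr_eq Hij' : restr (~: T) (fp (restr T i, c0)) = restr (~: T) (fp (restr T j, c0)).
  by rewrite !restrC_fpair.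
case: eqP => [/restr_eq Hij|Hne].
  rewrite mulr1 !mxE; apply: eq_bigr => k _.
  case: (boolP (k \in T)) => Hk; first by rewrite Hi // Hj.
  have HkC : k \in ~: T by rewrite inE Hk.
  rewrite Hx0 // /pauli1 /= Hij // Hij' //.
  by rewrite !eqxx.
rewrite mulr0 mxE.
have [k Hk Hb] : exists2 k, k \in ~: T & qbit i k != qbit j k.
  apply/exists_inP; rewrite -negb_forall_in; apply/negP => /forall_inP H.
  by apply: Hne; apply/restr_eq => k Hk; apply/eqP/H.
rewrite (bigD1 k) //= Hx0; last by move: Hk; rewrite inE.
by rewrite /pauli1 /= (negbTE Hb) mul0r.
Qed.

Lemma scaleE m (a : C) (X : 'M[C]_m) i j : (a *: X) i j = a * X i j.
Proof. by rewrite mxE. Qed.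

Definition Apart (U : 'M[C]_(2^n)) : 'M[C]_(2^n) :=
  \sum_(x | in_Z4T T x) mu x U *: pauli C x.

Definition Wp (U : 'M[C]_(2^n)) : 'M[C]_M :=
  \matrix_(a, b) Apart U (fp (a, Ordinal (expn_gt0 2 #|~: T|)))
                         (fp (b, Ordinal (expn_gt0 2 #|~: T|))).

Lemma Apart_tensor U : Apart U = tensorT T (Wp U).
Proof.
apply/matrixP => i j; rewrite !mxE /Apart !summxE mulr_suml.
apply: eq_bigr => x Hx; rewrite !scaleE (pauli_struct Hx (Ordinal (expn_gt0 2 #|~: T|))).
by rewrite mulrA.
Qed.
End Struct.

Section FrobLin.
Variable C : numClosedFieldType.
Variable m : nat.
Implicit Types X Y Z : 'M[C]_m.

Lemma frobBl X Y Z : frob (X - Y) Z = frob X Z - frob Y Z.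
Proof.
rewrite /frob -sumrB; apply: eq_bigr => i _; rewrite -sumrB; apply: eq_bigr => j _.
by rewrite !mxE rmorphB /= mulrBl.
Qed.

Lemma frobBr X Y Z : frob X (Y - Z) = frob X Y - frob X Z.
Proof. by rewrite frobC frobBl rmorphB /= -!frobC. Qed.

Lemma frob_sumr (I : finType) (P : pred I) (c : I -> C) (S : I -> 'M[C]_m) Z :
  frob Z (\sum_(x | P x) c x *: S x) = \sum_(x | P x) c x * frob Z (S x).
Proof.
rewrite /frob.
under eq_bigr do under eq_bigr do rewrite summxE mulr_sumr.
under [RHS]eq_bigr do rewrite mulr_sumr.
rewrite [RHS]exchange_big /=; apply: eq_bigr => i _.
under [RHS]eq_bigr do rewrite mulr_sumr.
rewrite [RHS]exchange_big /=; apply: eq_bigr => j _.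
apply: eq_bigr => x _; rewrite mxE; ring.
Qed.

Lemma frob_suml (I : finType) (P : pred I) (c : I -> C) (S : I -> 'M[C]_m) Z :
  frob (\sum_(x | P x) c x *: S x) Z = \sum_(x | P x) (c x)^* * frob (S x) Z.
Proof.
rewrite frobC frob_sumr rmorph_sum; apply: eq_bigr => x _.
by rewrite rmorphM /= -frobC.
Qed.
End FrobLin.

Lemma sum4 (C : numClosedFieldType) (I J : finType) (f g h k : I -> J -> C) :
  \sum_a \sum_b (f a b - g a b - h a b + k a b) =
  \sum_a \sum_b f a b - \sum_a \sum_b g a b - \sum_a \sum_b h a b + \sum_a \sum_b k a b.
Proof.
rewrite -!sumrB -big_split /=; apply: eq_bigr => a _.
by rewrite -!sumrB -big_split.
Qed.

Section PauliNorm.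
Variable C : numClosedFieldType.
Variable n : nat.
Variable T : {set 'I_n}.
Local Notation M := (2 ^ #|T|)%N.
Local Notation K := (2 ^ #|~: T|)%N.
Local Notation N := (2 ^ n)%N.

Lemma N_neq0 : (N%:R : C) != 0.
Proof. by rewrite pnatr_eq0 -lt0n expn_gt0. Qed.

Lemma frob_pauli_U x (U : 'M[C]_N) : frob (pauli C x) U = N%:R * mu x U.
Proof. by rewrite frob_pauliL /mu mulrA divff ?mul1r // N_neq0. Qed.

Lemma frob_U_A (U : 'M[C]_N) :
  frob U (Apart T U) = N%:R * \sum_(x | in_Z4T T x) `|mu x U| ^+ 2.
Proof.
rewrite frob_sumr mulr_sumr; apply: eq_bigr => x _.
rewrite frobC frob_pauli_U rmorphM /= conjC_nat normCK; ring.
Qed.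

Lemma frob_A_U (U : 'M[C]_N) :
  frob (Apart T U) U = N%:R * \sum_(x | in_Z4T T x) `|mu x U| ^+ 2.
Proof.
rewrite frob_suml mulr_sumr; apply: eq_bigr => x _.
rewrite frob_pauli_U normCK; ring.
Qed.

Lemma frob_A_A (U : 'M[C]_N) :
  frob (Apart T U) (Apart T U) = N%:R * \sum_(x | in_Z4T T x) `|mu x U| ^+ 2.
Proof.
rewrite frob_suml mulr_sumr; apply: eq_bigr => x Hx.
rewrite frob_sumr (bigD1 x) //= big1 ?addr0.
  by rewrite frob_pauli eqxx (_ : true%:R = 1 :> C) // normCK; ring.
by move=> y /andP [_ Hy]; rewrite frob_pauli eq_sym (negbTE Hy) !mulr0.
Qed.

Lemma frob_UA (U : 'M[C]_N) : unitary U ->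
  frob (U - Apart T U) (U - Apart T U) =
  N%:R * (1 - \sum_(x | in_Z4T T x) `|mu x U| ^+ 2).
Proof.
move=> HU; rewrite frobBl !frobBr frob_unitary // frob_U_A frob_A_U frob_A_A; ring.
Qed.

Lemma proj_ineq (U : 'M[C]_N) (Y : 'M[C]_M) : unitary U ->
  N%:R - (K%:R)^-1 * \sum_a \sum_b `|TrW T U a b| ^+ 2 <=
  frob (U - tensorT T Y) (U - tensorT T Y).
Proof.
move=> HU.
have HK : (K%:R : C) != 0 by rewrite pnatr_eq0 -lt0n expn_gt0.
rewrite frobBl !frobBr frob_unitary // frob_tensor [frob U _]frobC frob_tensorL.
rewrite -subr_ge0.
set F := \sum_a \sum_b (Y a b)^* * TrW T U a b.
have -> : N%:R - F^* - (F - K%:R * frob Y Y) -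
    (N%:R - (K%:R)^-1 * \sum_a \sum_b `|TrW T U a b| ^+ 2) =
  \sum_a \sum_b (K%:R)^-1 * ((K%:R * Y a b - TrW T U a b) * (K%:R * Y a b - TrW T U a b)^*).
  have E1 : N%:R - F^* - (F - K%:R * frob Y Y) -
    (N%:R - (K%:R)^-1 * \sum_a \sum_b `|TrW T U a b| ^+ 2) =
    K%:R * frob Y Y - F - F^* + (K%:R)^-1 * \sum_a \sum_b `|TrW T U a b| ^+ 2 by ring.
  rewrite E1.
  transitivity (\sum_a \sum_b (K%:R * ((Y a b)^* * Y a b) - (Y a b)^* * TrW T U a b
     - ((Y a b)^* * TrW T U a b)^* + (K%:R)^-1 * `|TrW T U a b| ^+ 2)).
    rewrite sum4 /F /frob rmorph_sum !mulr_sumr; congr (_ - _ - _ + _).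
    - by apply: eq_bigr => a _; rewrite mulr_sumr.
    - by apply: eq_bigr => a _; rewrite rmorph_sum.
    - by apply: eq_bigr => a _; rewrite mulr_sumr.
  apply: eq_bigr => a _; apply: eq_bigr => b _.
  rewrite normCK !rmorphB !rmorphM /= conjC_nat conjCK /=.
  by field.
apply: sumr_ge0 => a _; apply: sumr_ge0 => b _.
by apply: mulr_ge0; [rewrite invr_ge0 ler0n | exact: mul_conjC_ge0].
Qed.

End PauliNorm.

Section Complete.
Variable C : numClosedFieldType.

Definition gram m (Z : 'M[C]_m) k l := \sum_a (Z a k)^* * Z a l.

Lemma unitary_gram m (X : 'M[C]_m) : (forall k l, gram X k l = (k == l)%:R) -> unitary X.
Proof.
move=> H; rewrite /unitary; apply/eqP/matrixP => k l; rewrite !mxE -H /gram.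
by apply: eq_bigr => a _; rewrite !mxE.
Qed.

Lemma gram_unitary m (X : 'M[C]_m) : unitary X -> forall k l, gram X k l = (k == l)%:R.
Proof.
move=> /eqP H k l; have := congr1 (fun Y : 'M_m => Y k l) H; rewrite !mxE => <-.
by apply: eq_bigr => a _; rewrite !mxE.
Qed.

Lemma zero_col m (Z : 'M[C]_m) k : gram Z k k = 0 -> forall a, Z a k = 0.
Proof.
move=> H a.
have Hp : forall b, predT b -> 0 <= (Z b k)^* * Z b k.
  by move=> b _; rewrite mulrC mul_conjC_ge0.
have := @psumr_eq0P _ _ predT (fun a => (Z a k)^* * Z a k) Hp H a erefl.
by move=> /eqP; rewrite mulrC mul_conjC_eq0 => /eqP.
Qed.

Lemma complete m (Z : 'M[C]_m) :
  (forall k l, k != l -> gram Z k l = 0) ->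
  (forall k, gram Z k k = 0 \/ gram Z k k = 1) ->
  exists X : 'M[C]_m, unitary X /\
    forall k, gram Z k k = 1 -> forall a, X a k = Z a k.
Proof.
have [c Hc] := ubnP #|[set k | gram Z k k == 0]|.
elim: c Z Hc => [//|c IH] Z Hc Hoff Hdiag.
case: (set_0Vmem [set k | gram Z k k == 0]) => [H0|[k0]].
  exists Z; split => // ; apply: unitary_gram => k l.
  case: (eqVneq k l) => [<-|Hkl]; last by rewrite Hoff.
  case: (Hdiag k) => // Hk.
  suff : k \in [set k | gram Z k k == 0] by rewrite H0 inE.
  by rewrite inE Hk.
rewrite inE => /eqP Hk0.
have Zk0 := zero_col Hk0.
have Hdet : \det Z = 0 by rewrite (expand_det_col Z k0) big1 // => a _; rewrite Zk0 mul0r.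
have Hrk : (\rank Z < m)%N.
  rewrite ltn_neqAle rank_leq_row andbT; apply/negP => /eqP Hr.
  have : Z \in unitmx by rewrite -row_free_unit /row_free Hr.
  by rewrite unitmxE unitfE Hdet eqxx.
have : kermx (map_mx Num.conj Z) != 0.
  by rewrite -mxrank_eq0 mxrank_ker mxrank_map -lt0n subn_gt0.
case/rowV0Pn => w; rewrite sub_kermx => /eqP Hw Hw0.
have Hwk j : \sum_a w 0 a * (Z a j)^* = 0.
  have := congr1 (fun Y : 'rV_m => Y 0 j) Hw; rewrite !mxE => H; rewrite -[RHS]H.
  by apply: eq_bigr => a _; rewrite mxE.
pose t := \sum_a `|w 0 a| ^+ 2.
have Ht : 0 < t.
  rewrite lt_def sumr_ge0 ?andbT; last by move=> a _; rewrite exprn_ge0.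
  apply: contra Hw0 => /eqP Ht0; apply/eqP/rowP => a; rewrite mxE.
  have Hp : forall b, predT b -> 0 <= `|w 0 b| ^+ 2.
    by move=> b _; rewrite exprn_ge0.
  have := @psumr_eq0P _ _ predT (fun a => `|w 0 a| ^+ 2) Hp Ht0 a erefl.
  by move/eqP; rewrite expf_eq0 /= normr_eq0 => /eqP.
pose s := (sqrtC t)^-1.
have Hs : s ^+ 2 * t = 1.
  by rewrite /s exprVn sqrtCK mulVf // gt_eqF.
have Hsr : s^* = s.
  by apply/CrealP; rewrite /s realV; apply: sqrtC_real; exact: ltW.
pose Z' := \matrix_(a, k) if k == k0 then w 0 a * s else Z a k.
have G'off k : k != k0 -> gram Z' k k0 = 0.
  move=> Hk; rewrite /gram.
  transitivity (s * (\sum_a w 0 a * (Z a k)^*)); last by rewrite Hwk mulr0.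
  rewrite mulr_sumr; apply: eq_bigr => a _; rewrite !mxE eqxx (negbTE Hk); ring.
have G'same k l : k != k0 -> l != k0 -> gram Z' k l = gram Z k l.
  move=> Hk Hl; apply: eq_bigr => a _; by rewrite !mxE (negbTE Hk) (negbTE Hl).
have G'k0 : gram Z' k0 k0 = 1.
  rewrite -Hs /gram /t mulr_sumr; apply: eq_bigr => a _.
  rewrite !mxE eqxx rmorphM /= Hsr mulrC normCK; ring.
have G'sym k l : gram Z' l k = (gram Z' k l)^*.
  rewrite /gram rmorph_sum; apply: eq_bigr => a _; by rewrite rmorphM /= conjCK mulrC.
have Hoff' k l : k != l -> gram Z' k l = 0.
  move=> Hkl; case: (eqVneq l k0) => [El|Hl].
    by rewrite El; apply: G'off; rewrite -El.
  case: (eqVneq k k0) => [Ek|Hk].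
    by rewrite G'sym Ek G'off // conjC0.
  by rewrite G'same // Hoff.
have Hdiag' k : gram Z' k k = 0 \/ gram Z' k k = 1.
  case: (eqVneq k k0) => [->|Hk]; first by right.
  by rewrite G'same //; exact: Hdiag.
have Hset : [set k | gram Z' k k == 0] = [set k | gram Z k k == 0] :\ k0.
  apply/setP => k; rewrite !inE.
  case: (eqVneq k k0) => [->|Hk] /=; first by rewrite G'k0 oner_eq0.
  by rewrite G'same.
have Hc' : (#|[set k | gram Z' k k == 0%R]| < c)%N.
  move: Hc; rewrite (cardsD1 k0) inE Hk0 eqxx Hset /=; by rewrite ltnS.
have [X [HX HXZ]] := IH Z' Hc' Hoff' Hdiag'.
exists X; split => // k Hk a.
have Hkk0 : k != k0.
  by apply/eqP => Ek; move: Hk; rewrite Ek Hk0 => /eqP; rewrite eq_sym oner_eq0.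
rewrite HXZ; first by rewrite mxE (negbTE Hkk0).
by rewrite G'same.
Qed.
End Complete.

Section SVD.
Variable C : numClosedFieldType.
Variable m : nat.
Implicit Types A B : 'M[C]_m.

Lemma adjM A B : adj (A *m B) = adj B *m adj A.
Proof. by rewrite /adj map_mxM trmx_mul. Qed.

Lemma adjK A : adj (adj A) = A.
Proof. by apply/matrixP => i j; rewrite !mxE conjCK. Qed.

Lemma adj_ts A : map_mx Num.conj (A^T) = adj A.
Proof. by apply/matrixP => i j; rewrite !mxE. Qed.

Lemma adj_diag (d : 'rV[C]_m) : adj (diag_mx d) = diag_mx (map_mx Num.conj d).
Proof.
apply/matrixP => i j; rewrite !mxE eq_sym.
by case: eqP => [->|_]; rewrite ?mulr1n ?mulr0n ?conjC0.
Qed.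

Lemma unitaryC A : unitary A -> A *m adj A = 1%:M.
Proof. by move=> /eqP /mulmx1C. Qed.

Lemma svd_facts (G : 'M[C]_m) : exists V : 'M[C]_m, exists sg : 'I_m -> C,
  exists X P : 'M[C]_m,
  [/\ unitary V, (forall k, 0 <= sg k), frob V G = \sum_k sg k,
      frob G G = \sum_k sg k ^+ 2 &
      forall k, [/\ sg k = \sum_a \sum_b (X a k)^* * G a b * (P k b)^*,
                    \sum_a `|X a k| ^+ 2 = 1 & \sum_b `|(P k b)^*| ^+ 2 = 1]].
Proof.
pose H := adj G *m G.
have HH : adj H = H by rewrite /H adjM adjK.
have Hn : H \is normalmx.
  by apply/normalmxP; rewrite adj_ts HH.
pose P := spectralmx H.
pose d := spectral_diag H.
have HP : P \is unitarymx := spectral_unitarymx H.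
have PPa : P *m adj P = 1%:M by rewrite -adj_ts; apply/unitarymxP.
have PaP : adj P *m P = 1%:M by apply: mulmx1C.
have Hd : H = adj P *m diag_mx d *m P.
  by rewrite -adj_ts -invmx_unitary //; apply/orthomx_spectralP.
pose R := G *m adj P.
have RR : adj R *m R = diag_mx d.
  rewrite /R adjM adjK -!mulmxA (mulmxA (adj G)) -/H Hd.
  by rewrite !mulmxA PPa mul1mx -mulmxA PPa mulmx1.
have gR k l : gram R k l = d 0 k *+ (k == l).
  have := congr1 (fun Y : 'M_m => Y k l) RR; rewrite !mxE => <-.
  by apply: eq_bigr => a _; rewrite !mxE.
have d0 k : 0 <= d 0 k.
  have := gR k k; rewrite eqxx mulr1n => <-; apply: sumr_ge0 => a _.
  by rewrite mulrC mul_conjC_ge0.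
pose sg k := sqrtC (d 0 k).
have sg0 k : 0 <= sg k by rewrite sqrtC_ge0.
have sgr k : (sg k)^* = sg k by rewrite geC0_conj.
pose Z : 'M[C]_m := \matrix_(a, k) (R a k / sg k).
have gZ k l : gram Z k l = (sg k)^-1 * (sg l)^-1 * gram R k l.
  rewrite /gram mulr_sumr; apply: eq_bigr => a _; rewrite !mxE rmorphM /= fmorphV /= sgr.
  ring.
have Hoff k l : k != l -> gram Z k l = 0.
  by move=> Hkl; rewrite gZ gR (negbTE Hkl) mulr0n mulr0.
have Hdiag k : gram Z k k = 0 \/ gram Z k k = 1.
  rewrite gZ gR eqxx mulr1n.
  case: (eqVneq (d 0 k) 0) => [->|Hd0]; first by left; rewrite mulr0.
  right; have Hs : sg k != 0 by rewrite /sg sqrtC_eq0.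
  rewrite -(sqrtCK (d 0 k)) -/(sg k); field; exact: Hs.
have [X [HX HXZ]] := complete Hoff Hdiag.
have RX a k : R a k = X a k * sg k.
  case: (eqVneq (d 0 k) 0) => [Hd0|Hd0].
    have := @zero_col C m R k; rewrite gR eqxx mulr1n Hd0 => /(_ erefl a) ->.
    by rewrite /sg Hd0 sqrtC0 mulr0.
  have Hs : sg k != 0 by rewrite /sg sqrtC_eq0.
  have Hg : gram Z k k = 1.
    rewrite gZ gR eqxx mulr1n -(sqrtCK (d 0 k)) -/(sg k); field; exact: Hs.
  by rewrite HXZ // [Z a k]mxE divfK.
pose D := diag_mx (\row_k sg k).
have GXD : G = X *m D *m P.
  have -> : X *m D = R.
    by apply/matrixP => a k; rewrite mul_mx_diag RX !mxE.
  by rewrite /R -mulmxA PaP mulmx1.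
have XaX : adj X *m X = 1%:M by apply/eqP.
exists (X *m P), sg, X, P; split => //.
- rewrite /unitary adjM -mulmxA (mulmxA (adj X)) XaX mul1mx PaP //.
- rewrite -tr_adj adjM GXD !mulmxA -(mulmxA (adj P)) XaX mulmx1.
  by rewrite mxtrace_mulC mulmxA PPa mul1mx mxtrace_diag; apply: eq_bigr => k _; rewrite mxE.
- rewrite -tr_adj GXD !adjM !mulmxA -(mulmxA (adj P *m adj D)) XaX mulmx1.
  rewrite mxtrace_mulC !mulmxA PPa mul1mx tr_adj /frob.
  apply: eq_bigr => i _; rewrite (bigD1 i) //= big1 ?addr0.
    by rewrite !mxE eqxx !mulr1n sgr.
  by move=> j Hj; rewrite !mxE eq_sym (negbTE Hj) mulr0n conjC0 mul0r.
move=> k; split.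
- have E : adj X *m G *m adj P = D.
    by rewrite GXD !mulmxA XaX mul1mx -mulmxA PPa mulmx1.
  have := congr1 (fun Y : 'M_m => Y k k) E; rewrite /D !mxE eqxx mulr1n => <-.
  rewrite exchange_big /=; apply: eq_bigr => b _; rewrite !mxE mulr_suml.
  by apply: eq_bigr => a _; rewrite !mxE.
- have := congr1 (fun Y : 'M_m => Y k k) XaX; rewrite !mxE eqxx => HH2.
  rewrite (_ : 1 = true%:R) // -HH2.
  by apply: eq_bigr => a _; rewrite !mxE normCK mulrC.
- have := congr1 (fun Y : 'M_m => Y k k) PPa; rewrite !mxE eqxx => HH2.
  rewrite (_ : 1 = true%:R) // -HH2.
  by apply: eq_bigr => b _; rewrite !mxE normCK conjCK mulrC.
Qed.
End SVD.

Unset Implicit Arguments.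

Theorem mainTheorem4 (C : numClosedFieldType) (n : nat) (hn : (0 < n)%N)
  (U : 'M[C]_(2 ^ n)) (T : {set 'I_n}) (delta : C) :
  unitary U ->
  1 - delta <= \sum_(x : {ffun 'I_n -> 'I_4} | in_Z4T T x) `|mu x U| ^+ 2 ->
  exists Vt : 'M[C]_(2 ^ #|T|),
    unitary Vt /\ D_le U (tensorT T Vt) (2 * sqrtC delta).
Proof.
move=> HU Hs.
set s := \sum_(x | in_Z4T T x) `|mu x U| ^+ 2 in Hs.
pose G : 'M[C]_(2 ^ #|T|) := \matrix_(a, b) TrW T U a b.
have [V [sg [X [P [HV sg0 HVG HGG Hk]]]]] := svd_facts G.
exists V; split => //.
exists 1; split; first by rewrite normr1.
have HK : (0 : C) < (2 ^ #|~: T|)%:R by rewrite ltr0n expn_gt0.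
have HN : (0 : C) < (2 ^ n)%:R by rewrite ltr0n expn_gt0.
have sgr k : (sg k)^* = sg k by rewrite geC0_conj.
have Hsum : (2 ^ n)%:R * s <= ((2 ^ #|~: T|)%:R)^-1 * \sum_k sg k ^+ 2.
  have := proj_ineq (Wp T U) HU; rewrite -Apart_tensor frob_UA //.
  have -> : \sum_a \sum_b `|TrW T U a b| ^+ 2 = \sum_k sg k ^+ 2.
    rewrite -HGG /frob; apply: eq_bigr => a _; apply: eq_bigr => b _.
    by rewrite !mxE normCK mulrC.
  by rewrite mulrBr mulr1 lerD2l lerN2.
have Hsg k : sg k <= (2 ^ #|~: T|)%:R.
  have [E1 Ha Hb] := Hk k.
  have E2 : sg k = \sum_a \sum_b (X a k)^* * TrW T U a b * (P k b)^*.
    by rewrite E1; apply: eq_bigr => a _; apply: eq_bigr => b _; rewrite mxE.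
  have := contraction HU Ha Hb E2.
  rewrite sgr => H; rewrite -(@ler_pM2l _ 2) //.
  by rewrite (_ : 2 * sg k = sg k + sg k) //; ring.
have Hsq : \sum_k sg k ^+ 2 <= (2 ^ #|~: T|)%:R * \sum_k sg k.
  rewrite mulr_sumr; apply: ler_sum => k _; rewrite expr2.
  exact: (ler_wpM2r (sg0 k) (Hsg k)).
have Hsum2 : (2 ^ n)%:R * s <= \sum_k sg k.
  apply: le_trans Hsum _.
  rewrite -(mulKf (lt0r_neq0 HK) (\sum_k sg k)).
  by apply: ler_wpM2l => //; rewrite invr_ge0 ltW.
pose Q := frob (U - tensorT T V) (U - tensorT T V).
have HQ : Q = 2 * (2 ^ n)%:R - 2 * \sum_k sg k.
  rewrite /Q frobBl !frobBr frob_unitary // frob_tensor frob_unitary //.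
  rewrite [frob U _]frobC frob_tensorL.
  have -> : \sum_a \sum_b (V a b)^* * TrW T U a b = \sum_k sg k.
    rewrite -HVG /frob; apply: eq_bigr => a _; apply: eq_bigr => b _.
    by rewrite mxE.
  rewrite geC0_conj; last by apply: sumr_ge0.
  rewrite -natrM mulnC cardMK; ring.
have HQd : Q <= 2 * (2 ^ n)%:R * delta.
  rewrite HQ.
  apply: (@le_trans _ _ (2 * (2 ^ n)%:R - 2 * ((2 ^ n)%:R * s))).
    by rewrite lerD2l lerN2 ler_pM2l // ltr0n.
  have Hd : 1 - s <= delta.
    by move: Hs; rewrite lerBlDr addrC -lerBlDr.
  have -> : 2 * (2 ^ n)%:R - 2 * ((2 ^ n)%:R * s) = 2 * (2 ^ n)%:R * (1 - s) by ring.
  by apply: ler_wpM2l => //; rewrite mulr_ge0 // ltW.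
have HQ0 : 0 <= Q := frob_ge0 _.
have Hd0 : 0 <= delta.
  have := le_trans HQ0 HQd; rewrite pmulr_rge0 // mulr_gt0 // ltr0n.
rewrite /Dfun /fnorm scale1r tr_adj -/Q.
have H2N : (2 * 2 ^ n)%:R = 2 * (2 ^ n)%:R :> C by rewrite natrM.
rewrite H2N.
have H2N0 : (0 : C) <= 2 * (2 ^ n)%:R by rewrite mulr_ge0 // ltW.
have HsN : sqrtC (2 * (2 ^ n)%:R) != 0 :> C.
  by rewrite sqrtC_eq0 mulf_neq0 // lt0r_neq0.
apply: (@le_trans _ _ ((sqrtC (2 * (2 ^ n)%:R))^-1 * sqrtC (2 * (2 ^ n)%:R * delta))).
  apply: ler_wpM2l; first by rewrite invr_ge0 sqrtC_ge0.
  by rewrite ler_sqrtC // nnegrE // mulr_ge0.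
rewrite (@sqrtCM _ (2 * (2 ^ n)%:R) delta) ?nnegrE // mulKf //.
rewrite -subr_ge0 (_ : 2 * sqrtC delta - sqrtC delta = sqrtC delta); last by ring.
by rewrite sqrtC_ge0.
Qed.
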